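(* Every finite lattice $S$ is isomorphic to the skeleton $S(D)$ of some finite distributive lattice $D$.
   Context: For a modular lattice $M$ of finite length, an interval $[a,b]$ is \emph{atomistic} if every element of it is a join of atoms of $[a,b]$ (elements covering $a$); the \emph{skeleton} $S(M)$ is the set of least elements of the maximal (under inclusion) atomistic intervals of $M$, ordered as in $M$ (it is a lattice). *)

(* Defs.v *)
From HB Require Import structures.
From mathcomp Require Import all_boot all_order.
Set Implicit Arguments. Unset Strict Implicit. Unset Printing Implicit Defensive.
Import Order.TTheory.
Local Open Scope order_scope.

Section Skeleton.
Variables (disp : Order.disp_t) (L : finTBLatticeType disp).

Definition covers (a y : L) : bool :=
  (a < y) && [forall z : L, ~~ ((a < z) && (z < y))].

Definition atomI (a b y : L) : bool := covers a y && (y <= b).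

(* [a,b] is atomistic: every element of it is a join (computed in [a,b],
   i.e. with a as the empty join) of atoms of [a,b] *)
Definition atomistic (a b : L) : Prop :=
  a <= b /\
  forall x : L, a <= x -> x <= b ->
    exists A : {set L}, (forall y, y \in A -> atomI a b y) /\
                        x = a `|` \join_(y in A) y.

Definition max_atomistic (a b : L) : Prop :=
  atomistic a b /\
  forall c e : L, atomistic c e -> c <= a -> b <= e -> c = a /\ e = b.

Definition skeleton (a : L) : Prop :=
  exists b : L, max_atomistic a b.

End Skeleton.

(* Main.v *)
Require Import Defs.
From HB Require Import structures.
From mathcomp Require Import all_boot all_order.
Import Order.TTheory.
Local Open Scope order_scope.
Set Implicit Arguments. Unset Strict Implicit.

Section Constr.
Variables (d : Order.disp_t) (S : finTBLatticeType d).
Notation P := (S + S)%type.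

Definition downclosed (I : {set P}) : bool :=
  [forall b : S, (inr b \in I) ==> [forall z : S, ~~ (b <= z) ==> (inl z \in I)]].

Lemma downclosedP (I : {set P}) :
  reflect (forall b z : S, inr b \in I -> ~~ (b <= z) -> inl z \in I) (downclosed I).
Proof.
apply: (iffP forallP) => [H b z Hb Hz|H b].
  by move/implyP: (H b) => /(_ Hb) /forallP /(_ z) /implyP; apply.
by apply/implyP => Hb; apply/forallP => z; apply/implyP; apply: H.
Qed.

Record dset := DSet { dval :> {set P}; dvalP : downclosed dval }.
HB.instance Definition _ := [isSub for dval].
HB.instance Definition _ := [Finite of dset by <:].

Lemma dI (I J : dset) : downclosed (val I :&: val J).
Proof.
apply/downclosedP => b z; rewrite !inE => /andP[hI hJ] hz.
by rewrite (downclosedP _ (dvalP I) b z hI hz) (downclosedP _ (dvalP J) b z hJ hz).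
Qed.
Lemma dU (I J : dset) : downclosed (val I :|: val J).
Proof.
apply/downclosedP => b z; rewrite !inE => /orP[h|h] hz.
  by rewrite (downclosedP _ (dvalP I) b z h hz).
by rewrite (downclosedP _ (dvalP J) b z h hz) orbT.
Qed.
Lemma d0 : downclosed set0. Proof. apply/downclosedP => b z. rewrite in_set0. done. Qed.
Lemma d1 : downclosed setT. Proof. apply/downclosedP => b z. by rewrite !in_setT. Qed.

Definition dmeet I J := DSet (dI I J).
Definition djoin I J := DSet (dU I J).
Definition dle (I J : dset) := (val I \subset val J).
Definition dlt (I J : dset) := (J != I) && dle I J.

Fact dle_def x y : dle x y = (dmeet x y == x).
Proof. by rewrite /dle -val_eqE /=; apply/setIidPl/eqP. Qed.
Fact dlt_def x y : dlt x y = (y != x) && dle x y. Proof. by []. Qed.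
Fact dmeetC : commutative dmeet. Proof. by move=> x y; apply: val_inj; rewrite /= setIC. Qed.
Fact djoinC : commutative djoin. Proof. by move=> x y; apply: val_inj; rewrite /= setUC. Qed.
Fact dmeetA : associative dmeet. Proof. by move=> x y z; apply: val_inj; rewrite /= setIA. Qed.
Fact djoinA : associative djoin. Proof. by move=> x y z; apply: val_inj; rewrite /= setUA. Qed.
Fact djoinKI y x : dmeet x (djoin x y) = x. Proof. by apply: val_inj; rewrite /= setIC setUK. Qed.
Fact dmeetKU y x : djoin x (dmeet x y) = x. Proof. by apply: val_inj; rewrite /= setUC setIK. Qed.
Fact dmeetUl : left_distributive dmeet djoin.
Proof. by move=> x y z; apply: val_inj; rewrite /= setIUl. Qed.
Fact dmeetxx : idempotent_op dmeet. Proof. by move=> x; apply: val_inj; rewrite /= setIid. Qed.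

HB.instance Definition _ := Order.isMeetJoinDistrLattice.Build (Order.Disp tt tt) dset
  dle_def dlt_def dmeetC djoinC dmeetA djoinA djoinKI dmeetKU dmeetUl dmeetxx.

Definition dbot := DSet d0.
Definition dtop := DSet d1.
Fact dle0x (x : dset) : dbot <= x. Proof. exact: sub0set. Qed.
Fact dlex1 (x : dset) : x <= dtop. Proof. exact: subsetT. Qed.
HB.instance Definition _ := Order.hasBottom.Build (Order.Disp tt tt) dset dle0x.
HB.instance Definition _ := Order.hasTop.Build (Order.Disp tt tt) dset dlex1.


Lemma leE (I J : dset) : (I <= J) = (val I \subset val J). Proof. by []. Qed.
Lemma valjoin (I J : dset) : val (I `|` J) = val I :|: val J. Proof. by []. Qed.
Lemma valbig (A : {set dset}) :
  val (\join_(y in A) y) = \bigcup_(y in A) val y.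
Proof. by apply: (big_morph (fun I : dset => val I)). Qed.

Definition Uset (I : dset) : {set P} :=
  [set p | if p is inr b then [forall z : S, ~~ (b <= z) ==> (inl z \in val I)] else true].

Lemma Ucl I : downclosed (Uset I).
Proof. by apply/downclosedP => b z _ _; rewrite inE. Qed.
Definition Uel I := DSet (Ucl I).

Lemma IsubU (I : dset) : val I \subset Uset I.
Proof.
apply/subsetP => -[z|b] h; rewrite inE //.
by apply/forallP => z; apply/implyP => hz; exact: (downclosedP _ (dvalP I) b z h hz).
Qed.

Lemma ins_closed (I : dset) p : p \in Uset I -> downclosed (val I :|: [set p]).
Proof.
move=> pU; apply/downclosedP => b z; rewrite !inE => /orP[h|/eqP e] hz.
  by rewrite (downclosedP _ (dvalP I) b z h hz).
subst p; move: pU; rewrite inE => /forallP/(_ z)/implyP/(_ hz) ->; done.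
Qed.

Lemma covers_sub (I y : dset) : covers I y -> val y \subset Uset I.
Proof.
move=> /andP[ltIy /forallP nomid]; apply/subsetP => -[z|b] hp; rewrite inE //.
apply/forallP => z; apply/implyP => hz; apply/negPn/negP => nz.
have hzy : inl z \in val y := downclosedP _ (dvalP y) b z hp hz.
have cl : downclosed (val I :|: [set inl z]).
  apply/downclosedP => b' z'; rewrite !inE => /orP[h|/eqP e] hz'; last by [].
  by rewrite (downclosedP _ (dvalP I) _ _ h hz').
move: (nomid (DSet cl)); rewrite !lt_neqAle; move: ltIy; rewrite lt_neqAle => /andP[_ leIy].
have leIK : I <= DSet cl by rewrite leE subsetUl.
have leKy : DSet cl <= y by rewrite leE /= subUset -leE leIy sub1set.
rewrite leIK leKy !andbT => /negP; apply; apply/andP; split.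
  by apply/eqP => e; move: nz; rewrite e /= !inE eqxx orbT.
apply/eqP => e; have : inr b \in val (DSet cl) by rewrite e.
rewrite /= !inE => /orP[h|/eqP//].
by rewrite (downclosedP _ (dvalP I) b z h hz) in nz.
Qed.

Lemma atomisticP (I J : dset) : atomistic I J <-> (I <= J /\ val J \subset Uset I).
Proof.
split.
  case=> leIJ H; split => //.
  have [A [HA eJ]] := H J leIJ (lexx J).
  rewrite eJ valjoin valbig subUset IsubU /=.
  by apply/bigcupsP => y /HA /andP[cov _]; exact: covers_sub.
case=> leIJ sJU; split => // x leIx lexJ.
exists [set y : dset | atomI I J y && (y <= x)]; split.
  by move=> y; rewrite inE => /andP[].
apply: val_inj; apply/eqP; rewrite eqEsubset; apply/andP; split.
  apply/subsetP => p px; rewrite valjoin valbig inE.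
  case pI: (p \in val I) => //=.
  have pU : p \in Uset I by apply: (subsetP sJU); apply: (subsetP lexJ).
  apply/bigcupP; exists (DSet (ins_closed pU)); last by rewrite /= !inE eqxx orbT.
  have leIy : I <= DSet (ins_closed pU) by rewrite leE subsetUl.
  rewrite inE /atomI; apply/andP; split; last first.
    by rewrite leE /= subUset -leE leIx sub1set.
  apply/andP; split; last first.
    by rewrite leE /= subUset -leE (le_trans leIx lexJ) sub1set (subsetP lexJ).
  apply/andP; split.
    rewrite lt_neqAle leIy andbT; apply/eqP => e.
    by move: pI; rewrite e /= !inE eqxx orbT.
  apply/forallP => K; rewrite !lt_neqAle; apply/negP.
  move=> /andP[/andP[nIK leIK] /andP[nKy leKy]].
  case pK: (p \in val K).
    move/eqP: nKy; apply; apply: val_inj; apply/eqP; rewrite eqEsubset -leE leKy /=.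
    by rewrite subUset -leE leIK sub1set pK.
  move/eqP: nIK; apply; apply: val_inj; apply/eqP; rewrite eqEsubset -leE leIK /=.
  apply/subsetP => q qK; have := subsetP leKy q qK; rewrite /= !inE => /orP[//|/eqP e].
  by rewrite e pK in qK.
rewrite valjoin valbig subUset -leE leIx; apply/bigcupsP => y.
by rewrite inE => /andP[_ ]; rewrite leE.
Qed.

Definition fset (x : S) : {set P} := [set p | if p is inl z then ~~ (x <= z) else false].
Lemma fcl x : downclosed (fset x).
Proof. by apply/downclosedP => b z; rewrite inE. Qed.
Definition f x := DSet (fcl x).

Lemma f_le x y : (f x <= f y) = (x <= y).
Proof.
apply/idP/idP => [|lexy].
  rewrite leE => /subsetP /(_ (inl y)); rewrite /= !inE lexx /=.
  by case: (x <= y) => //; apply.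
rewrite leE; apply/subsetP => -[z|b]; rewrite /= !inE // => hz.
by apply: contra hz => yz; exact: le_trans lexy yz.
Qed.

Lemma skel_f x : skeleton (f x).
Proof.
exists (Uel (f x)); split.
  by apply/atomisticP; split; [rewrite leE IsubU | exact: subxx].
move=> C E /atomisticP [leCE sEU] leCf leUE.
have eC : C = f x.
  apply: val_inj; apply/eqP; rewrite eqEsubset -leE leCf /=.
  apply/subsetP => -[z|b]; rewrite inE // => hz.
  have : inr x \in val E.
    apply: (subsetP leUE); rewrite inE; apply/forallP => z'; apply/implyP => h.
    by rewrite inE.
  by move/(subsetP sEU); rewrite inE => /forallP/(_ z)/implyP; apply.
split => //; apply: val_inj; apply/eqP; rewrite eqEsubset; apply/andP; split; last exact: leUE.
by move: sEU; rewrite eC.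
Qed.

Lemma skel_char I : skeleton I -> exists x, f x = I.
Proof.
case=> J [/atomisticP [leIJ sJU] maxH].
pose Q := fun b : S => [forall z : S, ~~ (b <= z) ==> (inl z \in val I)].
have [x [xP xQ]] : exists x : S,
    (forall b, Q b -> b <= x) /\ (forall z, (forall b, Q b -> b <= z) -> x <= z).
  exists (\join_(b | Q b) b); split.
    by move=> b Qb; exact: (@joins_sup _ _ _ b Q id Qb).
  by move=> z H; apply/joinsP.
have fxI : f x <= I.
  rewrite leE; apply/subsetP => -[z|b]; rewrite inE // => hz.
  apply/contraT => nz; suff xz : x <= z by rewrite xz in hz.
  apply: xQ => b Qb; apply/contraT => nbz.
  by move: Qb => /forallP/(_ z)/implyP/(_ nbz); rewrite (negbTE nz).
have hat : atomistic (f x) J.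
  apply/atomisticP; split; first exact: le_trans fxI leIJ.
  apply/subsetP => -[z|b] pJ; rewrite inE //.
  have := subsetP sJU _ pJ; rewrite inE => Qb.
  apply/forallP => z; apply/implyP => nbz; rewrite inE.
  apply: contra nbz => xz; apply: le_trans xz.
  exact: xP.
have [e _] := maxH _ _ hat fxI (lexx J).
by exists x.
Qed.

End Constr.
Unset Implicit Arguments.
Set Strict Implicit.

Theorem theorem7p2 (d : Order.disp_t) (S : finTBLatticeType d) :
  exists (d' : Order.disp_t) (D : finTBDistrLatticeType d') (f : S -> D),
    injective f /\
    (forall x y : S, (f x <= f y) = (x <= y)) /\
    (forall z : D, skeleton z <-> exists x : S, f x = z).
Proof.
exists (Order.Disp tt tt), (dset S), (@f _ S); split; last split.
- move=> x y e; apply/le_anti/andP; split; rewrite -f_le e lexx //.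
- exact: f_le.
- move=> z; split; first exact: skel_char.
  by case=> x <-; exact: skel_f.
Qed.
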